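(* Assume the standing setting, let $\epsilon>0$, fix a coarse index $j$ and an integer $m$ with $1\le m\le r/2$. If $|u^0_i-u^0_{i+1}|\le \epsilon/3^{M}$ for all $i\in\mathbb Z$, then $|u^M_{jr}-u^M_{jr+m}|\le m\epsilon$.
   Context: Standing setting. Let $F:\mathbb R\to\mathbb R$ be continuously differentiable. For a spatial step $\eta>0$, a time step $\tau>0$ and an initial sequence $(z^0_i)_{i\in\mathbb Z}$ of reals, the EFC (Euler forward in time, centered in space) scheme produces $(z^n_i)_{i\in\mathbb Z,\,n\in\mathbb N}$ by $z^{n+1}_i=z^n_i-F'(z^n_i)\frac{\tau}{2\eta}\,(z^n_{i+1}-z^n_{i-1})$. It satisfies the CFL condition if $|F'(z^n_i)|\,\tau/\eta\le 1$ for all $i\in\mathbb Z$, $n\in\mathbb N$. Fix $a\in\mathbb R$, $h>0$, $\Delta t>0$, an integer $N>1$ and an even integer $r\ge 2$; put $k=h/r$, $dt=\Delta t/r$, $M=Nr$. Let $u_0:\mathbb R\to\mathbb R$. The coarse solution $(w^n_j)$ is the EFC scheme with $\eta=h$, $\tau=\Delta t$, $w^0_j=u_0(a+jh)$; the fine solution $(u^n_i)$ is the EFC scheme with $\eta=k$, $\tau=dt$, $u^0_i=u_0(a+ik)$ (so $w^0_j=u^0_{jr}$). Both are assumed to satisfy the CFL condition. *)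

(* Defs.v *)
From Stdlib Require Import Reals Lra Lia ZArith.
Open Scope R_scope.

(* EFC scheme (Euler forward in time, centered in space) for the flux F,
   given through its derivative dF = F'.  [efc dF eta tau z0 n i] = z^n_i. *)
Fixpoint efc (dF : R -> R) (eta tau : R) (z0 : Z -> R) (n : nat) : Z -> R :=
  match n with
  | O => z0
  | S n' => fun i =>
      efc dF eta tau z0 n' i
      - dF (efc dF eta tau z0 n' i) * (tau / (2 * eta))
        * (efc dF eta tau z0 n' (i + 1)%Z - efc dF eta tau z0 n' (i - 1)%Z)
  end.

Definition cfl (dF : R -> R) (eta tau : R) (z : nat -> Z -> R) : Prop :=
  forall (n : nat) (i : Z), Rabs (dF (z n i)) * tau / eta <= 1.

(* Main.v *)
Require Import Defs.
From Stdlib Require Import Reals ZArith Arith Lra Lia.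
Open Scope R_scope.

Lemma coef_bound (d tau eta : R) : 0 < eta -> 0 < tau ->
  Rabs d * tau / eta <= 1 -> Rabs (d * (tau / (2 * eta))) <= / 2.
Proof.
  intros He Ht H. rewrite Rabs_mult, (Rabs_right (tau / (2*eta))).
  2: { apply Rle_ge, Rlt_le; unfold Rdiv; apply Rmult_lt_0_compat; [lra|apply Rinv_0_lt_compat; lra]. }
  replace (Rabs d * (tau / (2 * eta))) with ((Rabs d * tau / eta) / 2) by (field; lra). lra.
Qed.

Lemma prod_bound (a x B : R) : Rabs a <= /2 -> Rabs x <= 2 * B -> Rabs (a * x) <= B.
Proof.
  intros Ha Hx. rewrite Rabs_mult.
  assert (0 <= Rabs a) by apply Rabs_pos. assert (0 <= Rabs x) by apply Rabs_pos. nra.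
Qed.

Lemma diff_bound dF eta tau z0 : 0 < eta -> 0 < tau ->
  cfl dF eta tau (efc dF eta tau z0) -> forall B,
  (forall i, Rabs (z0 i - z0 (i+1)%Z) <= B) ->
  forall n i, Rabs (efc dF eta tau z0 n i - efc dF eta tau z0 n (i+1)%Z) <= B * 3 ^ n.
Proof.
  intros He Ht Hc B H0 n. induction n as [|n IH]; intro i.
  - simpl. rewrite Rmult_1_r. apply H0.
  - simpl efc. set (z := efc dF eta tau z0 n).
    assert (A1 := coef_bound _ _ _ He Ht (Hc n i)).
    assert (A2 := coef_bound _ _ _ He Ht (Hc n (i+1)%Z)).
    fold z in A1, A2.
    set (a1 := dF (z i) * (tau / (2 * eta))) in *.
    set (a2 := dF (z (i+1)%Z) * (tau / (2 * eta))) in *.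
    assert (E1 := IH i). assert (E2 := IH (i-1)%Z). assert (E3 := IH (i+1)%Z).
    fold z in E1, E2, E3.
    replace (i - 1 + 1)%Z with i in E2 by lia.
    replace (i + 1 - 1)%Z with i by lia.
    assert (P1 : Rabs (a1 * (z (i+1)%Z - z (i-1)%Z)) <= B * 3 ^ n).
    { apply prod_bound; auto.
      replace (z (i+1)%Z - z (i-1)%Z) with (-((z i - z (i+1)%Z) + (z (i-1)%Z - z i))) by ring.
      rewrite Rabs_Ropp. eapply Rle_trans; [apply Rabs_triang|]. lra. }
    assert (P2 : Rabs (a2 * (z (i+1+1)%Z - z i)) <= B * 3 ^ n).
    { apply prod_bound; auto.
      replace (z (i+1+1)%Z - z i) with (-((z i - z (i+1)%Z) + (z (i+1)%Z - z (i+1+1)%Z))) by ring.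
      rewrite Rabs_Ropp. eapply Rle_trans; [apply Rabs_triang|]. lra. }
    replace (z i - a1 * (z (i + 1)%Z - z (i - 1)%Z) -
      (z (i + 1)%Z - a2 * (z (i + 1 + 1)%Z - z i)))
      with ((z i - z (i+1)%Z) - a1 * (z (i + 1)%Z - z (i - 1)%Z) + a2 * (z (i + 1 + 1)%Z - z i)) by ring.
    eapply Rle_trans; [apply Rabs_triang|].
    eapply Rle_trans; [apply Rplus_le_compat_r; apply Rabs_triang|].
    rewrite Rabs_Ropp. simpl pow. lra.
Qed.

Lemma tele (f : Z -> R) (D : R) (i : Z) :
  (forall l, Rabs (f l - f (l+1)%Z) <= D) ->
  forall m : nat, Rabs (f i - f (i + Z.of_nat m)%Z) <= INR m * D.
Proof.
  intros H m. induction m as [|m IH].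
  - simpl. rewrite Z.add_0_r, Rminus_diag, Rabs_R0. lra.
  - rewrite S_INR. rewrite Nat2Z.inj_succ.
    replace (i + Z.succ (Z.of_nat m))%Z with ((i + Z.of_nat m) + 1)%Z by lia.
    replace (f i - f (i + Z.of_nat m + 1)%Z) with
      ((f i - f (i + Z.of_nat m)%Z) + (f (i + Z.of_nat m)%Z - f (i + Z.of_nat m + 1)%Z)) by ring.
    eapply Rle_trans; [apply Rabs_triang|]. specialize (H (i + Z.of_nat m)%Z). lra.
Qed.

Theorem proposition9 :
  forall (F dF : R -> R),
    (forall x, derivable_pt_lim F x (dF x)) -> continuity dF ->
  forall (a h Dt : R) (N r : nat) (u0 : R -> R),
    0 < h -> 0 < Dt -> (1 < N)%nat -> (2 <= r)%nat -> Nat.Even r ->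
    let k := h / INR r in
    let dt := Dt / INR r in
    let M := (N * r)%nat in
    let w := efc dF h Dt (fun j => u0 (a + IZR j * h)) in
    let u := efc dF k dt (fun i => u0 (a + IZR i * k)) in
    cfl dF h Dt w -> cfl dF k dt u ->
  forall (eps : R) (j : Z) (m : nat),
    0 < eps -> (1 <= m)%nat -> (2 * m <= r)%nat ->
    (forall i : Z, Rabs (u O i - u O (i + 1)%Z) <= eps / 3 ^ M) ->
    Rabs (u M (j * Z.of_nat r)%Z - u M (j * Z.of_nat r + Z.of_nat m)%Z) <= INR m * eps.
Proof.
  intros F dF _ _ a h Dt N r u0 Hh HDt HN Hr _ k dt M w u _ Hu eps j m Heps _ _ H0.
  assert (Hrp : 0 < INR r) by (apply lt_0_INR; lia).
  assert (Hk : 0 < k) by (unfold k; unfold Rdiv; apply Rmult_lt_0_compat; auto; apply Rinv_0_lt_compat; auto).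
  assert (Hdt : 0 < dt) by (unfold dt; unfold Rdiv; apply Rmult_lt_0_compat; auto; apply Rinv_0_lt_compat; auto).
  assert (HB := diff_bound dF k dt _ Hk Hdt Hu (eps / 3 ^ M) H0 M).
  fold u in HB.
  assert (Hp : 0 < 3 ^ M) by (apply pow_lt; lra).
  replace (eps / 3 ^ M * 3 ^ M) with eps in HB by (field; lra).
  apply tele. exact HB.
Qed.
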